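(* Let $G$ be a finite simple unmixed graph with $r$ minimal vertex covers, and let $\mathcal{LS}(I_c(G))$ be the linear syzygy matrix of $I_c(G)$. Then the graph $\mathcal{G}_{I_c(G)}$ is connected if and only if ${\rm rank}(\mathcal{LS}(I_c(G)))=r-1$.
   Context: $G$ has vertex set $\{t_1,\ldots,t_s\}$, $S=K[t_1,\ldots,t_s]$, $K$ a field. $G$ is unmixed if all minimal vertex covers (inclusion-minimal sets of vertices meeting every edge) have the same size. Let $C_1,\ldots,C_r$ be the minimal vertex covers and $u_i=\prod_{t_j\in C_i}t_j$; $I_c(G)=(u_1,\ldots,u_r)$. The graph $\mathcal{G}_{I_c(G)}$ has vertex set $\{C_1,\ldots,C_r\}$, with $\{C_i,C_j\}$ ($i\ne j$) an edge iff $|C_i\cup C_j|=|C_i|+1$. The linear syzygy matrix $\mathcal{LS}(I_c(G))$ is the $r\times|E(\mathcal{G}_{I_c(G)})|$ matrix whose columns are the vectors $t_\ell e_i-t_ke_j\in S^r$ such that $t_\ell u_i=t_k u_j$, one for each edge $\{C_i,C_j\}$ (it is the zero matrix if there are no such syzygies). The rank is the determinantal rank: the largest $k$ such that some $k\times k$ minor is nonzero. *)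

(* Defs.v *)
From HB Require Import structures.
From mathcomp Require Import all_boot all_order all_algebra.
From mathcomp Require Import mpoly.
Set Implicit Arguments. Unset Strict Implicit. Unset Printing Implicit Defensive.
Import Order.TTheory GRing.Theory.
Local Open Scope ring_scope.

(* A finite simple graph on vertices t_1..t_s, indexed by 'I_s:
   a symmetric irreflexive relation. *)
Definition simple_graph (s : nat) (e : rel 'I_s) : Prop :=
  ssrbool.symmetric e /\ irreflexive e.

Definition vertex_cover (s : nat) (e : rel 'I_s) (C : {set 'I_s}) : bool :=
  [forall x, forall y, e x y ==> (x \in C) || (y \in C)].

Definition min_covers (s : nat) (e : rel 'I_s) : {set {set 'I_s}} :=
  [set C | minset (vertex_cover e) C].

Definition unmixed (s : nat) (e : rel 'I_s) : Prop :=
  forall C D, C \in min_covers e -> D \in min_covers e -> #|C| = #|D|.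

(* r = number of minimal vertex covers, C_i (i : 'I_r) their enumeration. *)
Definition ncov (s : nat) (e : rel 'I_s) : nat := #|min_covers e|.
Definition cov (s : nat) (e : rel 'I_s) (i : 'I_(ncov e)) : {set 'I_s} :=
  enum_val i.
Arguments cov {s} e i.

Definition cov_adj (s : nat) (e : rel 'I_s) : rel 'I_(ncov e) :=
  fun i j => (i != j) && (#|cov e i :|: cov e j| == #|cov e i| + 1)%N.
Arguments cov_adj {s} e i j.

Definition cov_graph_connected (s : nat) (e : rel 'I_s) : Prop :=
  forall i j : 'I_(ncov e), connect (cov_adj e) i j.

Definition cov_edges (s : nat) (e : rel 'I_s) : {set 'I_(ncov e) * 'I_(ncov e)} :=
  [set p : 'I_(ncov e) * 'I_(ncov e) | (p.1 < p.2)%N && cov_adj e p.1 p.2].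
Arguments cov_edges {s} e.

Definition monom (K : fieldType) (s : nat) (A : {set 'I_s}) : {mpoly K[s]} :=
  \prod_(x in A) 'X_x.

(* Linear syzygy matrix: the column for the edge {C_i,C_j} (i<j) is
   t_l e_i - t_k e_j, where {l} = C_j \ C_i and {k} = C_i \ C_j
   (so t_l u_i = t_k u_j); t_l is written as the monomial of C_j \ C_i. *)
Definition LS (K : fieldType) (s : nat) (e : rel 'I_s)
  : 'M[{mpoly K[s]}]_(ncov e, #|cov_edges e|) :=
  \matrix_(a, c)
    let p := @enum_val _ (mem (cov_edges e)) c in
    if a == p.1 then monom K (cov e p.2 :\: cov e p.1)
    else if a == p.2 then - monom K (cov e p.1 :\: cov e p.2)
    else 0.

Definition has_nonzero_minor (R : comRingType) (m n : nat) (A : 'M[R]_(m, n))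
  (k : nat) : bool :=
  [exists f : {ffun 'I_k -> 'I_m}, exists g : {ffun 'I_k -> 'I_n},
     [&& injectiveb f, injectiveb g & \det (mxsub f g A) != 0]].

Definition det_rank (R : comRingType) (m n : nat) (A : 'M[R]_(m, n)) : nat :=
  \max_(k < (minn m n).+1 | has_nonzero_minor A k) k.

(* Main.v *)
Require Import Defs.
From HB Require Import structures.
From mathcomp Require Import all_boot all_order all_algebra.
From mathcomp Require Import mpoly.
From mathcomp Require Import zify.
Set Implicit Arguments. Unset Strict Implicit. Unset Printing Implicit Defensive.
Import Order.TTheory GRing.Theory.
Local Open Scope ring_scope.

Lemma minor_aux (K : fieldType) m n (B : 'M[K]_(m,n)) a b
  (f : 'I_b -> 'I_m) (g : 'I_a -> 'I_n) :
  a = b -> injective f -> injective g ->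
  row_free (rowsub g (rowsub f B)^T) -> has_nonzero_minor B b.
Proof.
move=> eab; subst b => injf injg rf.
apply/existsP; exists [ffun x => f x]; apply/existsP; exists [ffun x => g x].
apply/and3P; split.
- by apply/injectiveP => x y; rewrite !ffunE => /injf.
- by apply/injectiveP => x y; rewrite !ffunE => /injg.
have -> : mxsub [ffun x => f x] [ffun x => g x] B = (rowsub g (rowsub f B)^T)^T.
  by apply/matrixP => i j; rewrite !mxE !ffunE.
by rewrite det_tr -unitfE -unitmxE -row_free_unit.
Qed.

Lemma minor_rank (K : fieldType) m n (B : 'M[K]_(m,n)) :
  has_nonzero_minor B (\rank B).
Proof.
pose f := maxrankfun B. pose C := (rowsub f B)^T.
have rC : \rank C = \rank B.
  by rewrite mxrank_tr; move/eqP: (maxrowsub_free B).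
apply: (@minor_aux _ _ _ B (\rank C) (\rank B) f (maxrankfun C) rC).
- exact: maxrankfun_inj.
- exact: maxrankfun_inj.
- exact: maxrowsub_free.
Qed.

Lemma minor_map (R S : comRingType) (phi : {rmorphism R -> S}) m n
  (A : 'M[R]_(m,n)) k :
  has_nonzero_minor (map_mx phi A) k -> has_nonzero_minor A k.
Proof.
case/existsP => f /existsP [g /and3P [hf hg hd]].
apply/existsP; exists f; apply/existsP; exists g; rewrite hf hg /=.
apply: contraNN hd; rewrite -map_mxsub det_map_mx => /eqP ->.
by rewrite rmorph0.
Qed.

Lemma det_kernel (R : idomainType) r n k (A : 'M[R]_(r, n))
  (f : 'I_k -> 'I_r) (g : 'I_k -> 'I_n) (w : 'I_r -> R) :
  injective f ->
  (forall c, \sum_a w a * A a c = 0) ->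
  (forall a, w a != 0 -> exists b, f b = a) ->
  (exists a, w a != 0) ->
  \det (mxsub f g A) = 0.
Proof.
move=> injf hsum hsupp [a0 ha0].
have [b0 fb0] := hsupp a0 ha0.
pose M := mxsub f g A.
pose v : 'rV_k := \row_b w (f b).
have vM : v *m M = 0.
  apply/rowP => c; rewrite !mxE.
  rewrite -[X in _ = X](hsum (g c)).
  rewrite [RHS](bigID (fun a => a \in codom f)) /=.
  rewrite [X in _ = _ + X]big1 ?addr0; last first.
    move=> a ha; case: (eqVneq (w a) 0) => [->|/hsupp [b fb]]; first by rewrite mul0r.
    by move: ha; rewrite -fb codom_f.
  have uc : uniq (codom f) by rewrite map_inj_uniq ?enum_uniq.
  have E : \sum_(a in codom f) w a * A a (g c) = \sum_b w (f b) * A (f b) (g c).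
    by rewrite -big_uniq // big_image.
  by rewrite E; apply: eq_bigr => b _; rewrite !mxE.
have : v *m (M *m \adj M) = 0 by rewrite mulmxA vM mul0mx.
rewrite mul_mx_adj mul_mx_scalar => /rowP /(_ b0); rewrite !mxE fb0 => /eqP.
by rewrite mulf_eq0 (negPf ha0) orbF => /eqP.
Qed.
Lemma natlem (a b : nat) : (a - b <= 1)%N -> (a.-1 <= b)%N.
Proof. lia. Qed.

Lemma cov_min s (e : rel 'I_s) (i : 'I_(ncov e)) : cov e i \in min_covers e.
Proof. exact: enum_valP. Qed.

Lemma cov_adj_sym s (e : rel 'I_s) : unmixed e ->
  forall i j, cov_adj e i j = cov_adj e j i.
Proof.
move=> um i j; rewrite /cov_adj eq_sym setUC.
by rewrite (um _ _ (cov_min i) (cov_min j)).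
Qed.

Lemma monom_split (K : fieldType) s (C D : {set 'I_s}) :
  monom K C * monom K (D :\: C) = monom K (C :|: D).
Proof.
rewrite /monom [RHS](big_setID C); congr (_ * _); apply: eq_bigl => x;
  by rewrite !inE; case: (x \in C); case: (x \in D).
Qed.

Lemma meval_monom (K : fieldType) s (C : {set 'I_s}) :
  (monom K C).@[fun _ => 1] = 1.
Proof. by rewrite /monom rmorph_prod; apply: big1 => x _; apply: mevalXU. Qed.

Lemma monom_neq0 (K : fieldType) s (C : {set 'I_s}) : monom K C != 0.
Proof.
apply/eqP => h; have := meval_monom K C; rewrite h meval0 => /eqP.
by rewrite eq_sym oner_eq0.
Qed.

Lemma LS_col s (e : rel 'I_s) (c : 'I_#|cov_edges e|) :
  ((@enum_val _ (mem (cov_edges e)) c).1 < (@enum_val _ (mem (cov_edges e)) c).2)%N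
  && cov_adj e (@enum_val _ (mem (cov_edges e)) c).1 (@enum_val _ (mem (cov_edges e)) c).2.
Proof. have := enum_valP c; rewrite inE; exact. Qed.

Lemma LS_kernel (K : fieldType) s (e : rel 'I_s) (X : {set 'I_(ncov e)}) :
  closed (cov_adj e) X ->
  forall c, \sum_a (if a \in X then monom K (cov e a) else 0) * LS K e a c = 0.
Proof.
move=> cl c; have /andP [lt adj] := LS_col c.
set p := enum_val c in lt adj *.
have ne : p.2 != p.1 by rewrite neq_ltn lt orbT.
rewrite (bigD1 p.1) // (bigD1 p.2) /=; last by rewrite ne.
rewrite big1 ?addr0; last first.
  by move=> a /andP [h2 h1]; rewrite mxE /= -/p (negPf h1) (negPf h2) mulr0.
rewrite !mxE /= -/p eqxx (negPf ne) eqxx -(cl _ _ adj).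
case: ifP => _; last by rewrite !mul0r addr0.
rewrite mulrN monom_split monom_split setUC subrr //.
Qed.

Lemma rank_lower (K : fieldType) s (e : rel 'I_s) : unmixed e ->
  cov_graph_connected e ->
  ((ncov e).-1 <= \rank (map_mx (meval (fun _ => (1%R : K))) (LS K e)))%N.
Proof.
move=> um conn; set B := map_mx _ _.
have Bc : forall c (v : 'rV[K]_(ncov e)),
    (v *m B) 0 c = v 0 (@enum_val _ (mem (cov_edges e)) c).1
                   - v 0 (@enum_val _ (mem (cov_edges e)) c).2.
  move=> c v; have /andP [lt adj] := LS_col c.
  set p := enum_val c in lt adj *.
  have ne : p.2 != p.1 by rewrite neq_ltn lt orbT.
  rewrite mxE (bigD1 p.1) // (bigD1 p.2) /=; last by rewrite ne.
  rewrite big1 ?addr0; last first.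
    by move=> a /andP [h2 h1]; rewrite !mxE /= -/p (negPf h1) (negPf h2) rmorph0 mulr0.
  rewrite !mxE /= -/p eqxx (negPf ne) eqxx mevalN !meval_monom mulr1 mulrN1.
  by [].
have const : forall v : 'rV[K]_(ncov e), v *m B = 0 -> forall i j, v 0 i = v 0 j.
  move=> v hv i j.
  have cl : closed (cov_adj e) [pred a | v 0 a == v 0 i].
    have H : forall a b, cov_adj e a b -> (a < b)%N -> (v 0 a == v 0 i) = (v 0 b == v 0 i).
      move=> a b adj lt.
      have ab : (a, b) \in cov_edges e by rewrite inE /= lt adj.
      have := Bc (enum_rank_in ab (a, b)) v.
      rewrite enum_rankK_in // hv mxE /= => /eqP; rewrite eq_sym subr_eq0 => /eqP ->.
      by [].
    move=> a b adj; rewrite !inE; case: (ltngtP a b) => h.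
    - exact: H.
    - by rewrite (H b a) // -cov_adj_sym.
    - by rewrite (val_inj h).
  by have := closed_connect cl (conn i j); rewrite !inE eqxx => /esym /eqP.
have hk : (\rank (kermx B) <= 1)%N.
  case: (posnP (ncov e)) => [r0|rpos].
    by apply: leq_trans (rank_leq_row _) _; rewrite r0.
  pose i0 := Ordinal rpos.
  apply: leq_trans (mxrankS (_ : (kermx B <= (const_mx 1 : 'rV[K]_(ncov e)))%MS)) (rank_leq_row _).
  apply/row_subP => k.
  have hk0 : row k (kermx B) *m B = 0 by rewrite -row_mul mulmx_ker row0.
  have -> : row k (kermx B) = (row k (kermx B)) 0 i0 *: const_mx 1.
    apply/rowP => j; rewrite !mxE mulr1; have := const _ hk0 j i0; rewrite !mxE //.
  by rewrite scalemx_sub.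
by move: hk; rewrite mxrank_ker; apply: natlem.
Qed.

Lemma no_minor (K : fieldType) s (e : rel 'I_s) (X : {set 'I_(ncov e)}) k
  (f : 'I_k -> 'I_(ncov e)) (g : 'I_k -> 'I_#|cov_edges e|) :
  closed (cov_adj e) X -> X != set0 -> injective f -> X \subset codom f ->
  \det (mxsub f g (LS K e)) = 0.
Proof.
move=> cl /set0Pn [x xX] injf sub.
apply: (@det_kernel _ _ _ _ _ f g (fun a => if a \in X then monom K (cov e a) else 0) injf).
- exact: LS_kernel.
- move=> a; case: ifP => [aX _|_]; last by rewrite eqxx.
  by have /codomP [b ->] := subsetP sub a aX; exists b.
- by exists x; rewrite xX monom_neq0.
Qed.

Lemma card_miss k r (f : 'I_k -> 'I_r) (S : {set 'I_r}) :
  injective f -> (forall b, f b \notin S) -> (k <= r - #|S|)%N.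
Proof.
move=> injf hS.
have : codom f \subset ~: S by apply/subsetP => a /codomP [b ->]; rewrite inE hS.
move/subset_leq_card; rewrite card_codom // card_ord => h.
have hc := cardsC S; rewrite card_ord in hc.
move: h hc; set c := #|~: S|; set d := #|S|; lia.
Qed.

Theorem proposition4p1 (K : fieldType) (s : nat) (e : rel 'I_s) :
  simple_graph e -> unmixed e ->
  cov_graph_connected e <-> det_rank (LS K e) = (ncov e).-1.
Proof.
move=> _ um; have hsym := cov_adj_sym um.
split.
- move=> conn; apply/eqP; rewrite eqn_leq; apply/andP; split.
  + apply/bigmax_leqP => k hk.
    have kr : (k <= ncov e)%N.
      by apply: leq_trans (geq_minl (ncov e) #|cov_edges e|); rewrite -ltnS.
    case: (posnP (ncov e)) => [r0|rpos].
      by move: kr r0; lia.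
    rewrite leq_eqVlt in kr; case/orP: kr => [/eqP kr|kr]; last first.
      by rewrite -ltnS prednK.
    exfalso; case/existsP: hk => f /existsP [g /and3P [/injectiveP hf hg hd]].
    case: (boolP ([set: 'I_(ncov e)] \subset codom f)) => sub.
      move: hd; rewrite (no_minor K g _ _ hf sub) ?eqxx //.
        by move=> a b _; rewrite !inE.
      by apply/set0Pn; exists (Ordinal rpos); rewrite inE.
    have /subsetPn [a _ af] := sub.
    have := card_miss (S := [set a]) hf.
    rewrite cards1 => /(_ _) hh.
    have : (k <= ncov e - 1)%N.
      apply: hh => c; rewrite inE; apply/eqP => fc; apply: (negP af); rewrite -fc codom_f //.
    rewrite kr; lia.
  + pose B := map_mx (meval (fun _ => 1%R : K)) (LS K e).
    have hB : has_nonzero_minor (LS K e) (\rank B) := minor_map (minor_rank B).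
    apply: leq_trans (rank_lower K um conn) _.
    have hlt : (\rank B < (minn (ncov e) #|cov_edges e|).+1)%N.
      by rewrite ltnS leq_min rank_leq_row rank_leq_col.
    rewrite /det_rank; exact: (leq_bigmax_cond (Ordinal hlt) hB).
- move=> hdr i j; apply/idPn => nc.
  have ij : i != j by apply: contraNneq nc => ->; exact: connect0.
  have r2 : (2 <= ncov e)%N.
    have := ltn_ord i; have := ltn_ord j.
    have : (i : nat) <> (j : nat) by move=> /val_inj; apply/eqP.
    lia.
  have : (det_rank (LS K e) <= ncov e - 2)%N.
    apply/bigmax_leqP => k hk; rewrite leqNgt; apply/negP => kgt.
    case/existsP: hk => f /existsP [g /and3P [/injectiveP hf hg hd]].
    set X := [set a | connect (cov_adj e) i a].
    have clX : closed (cov_adj e) X.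
      move=> a b adj; rewrite !inE; apply/idP/idP => h.
        exact: connect_trans h (connect1 adj).
      by apply: connect_trans h (connect1 _); rewrite hsym.
    have clY : closed (cov_adj e) (~: X).
      by move=> a b adj; have := clX a b adj; rewrite !inE => ->.
    case: (boolP (X \subset codom f)) => sX.
      move: hd; rewrite (no_minor K g clX _ hf sX) ?eqxx //.
      by apply/set0Pn; exists i; rewrite inE connect0.
    case: (boolP (~: X \subset codom f)) => sY.
      move: hd; rewrite (no_minor K g clY _ hf sY) ?eqxx //.
      by apply/set0Pn; exists j; rewrite !inE.
    have /subsetPn [a aX af] := sX.
    have /subsetPn [b bY bf] := sY.
    have ab : a != b.
      by apply: contraTneq bY => <-; rewrite in_setC negbK.
    have := card_miss (S := [set a; b]) hf.
    rewrite cards2 ab => /(_ _) hh.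
    have : (k <= ncov e - 2)%N.
      apply: hh => c; rewrite !inE; apply/norP; split; apply/eqP => fc;
        [apply: (negP af) | apply: (negP bf)]; rewrite -fc codom_f //.
    lia.
  rewrite hdr; lia.
Qed.
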